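(* Every coherent strongly Kripke complete normal modal logic is weakly transitive.
   Context: For a normal modal logic $\mathsf{L}$, let $\mathcal{V}_\mathsf{L}$ be the variety of modal algebras that is its equivalent algebraic semantics (consequence is global consequence). $\mathsf{L}$ is called coherent if $\mathcal{V}_\mathsf{L}$ is coherent, i.e., every finitely generated subalgebra of a finitely presented member of $\mathcal{V}_\mathsf{L}$ is finitely presented in $\mathcal{V}_\mathsf{L}$. $\mathsf{L}$ is strongly Kripke complete if for every set of formulas $\Gamma\cup\{\varphi\}$ with $\Gamma\not\vdash_\mathsf{L}\varphi$ there is a Kripke frame $\mathfrak{F}$ for $\mathsf{L}$ and a valuation $v$ with $\mathfrak{F}\models_v\Gamma$ and $\mathfrak{F}\not\models_v\varphi$. With $\boxdot x := x\wedge\Box x$, $\mathsf{L}$ is $n$-transitive if $\vdash_\mathsf{L}\boxdot^n x\to\boxdot^{n+1}x$, and weakly transitive if it is $n$-transitive for some $n\in\mathbb{N}$. *)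

(* Defs.v *)
(* Boolean algebras are MathComp's ctbDistrLatticeType. *)
From HB Require Import structures.
From mathcomp Require Import all_boot all_order.
From Stdlib Require List.
Set Implicit Arguments.
Unset Strict Implicit.
Unset Printing Implicit Defensive.

Inductive form : Type :=
| Var : nat -> form
| Bot : form
| Imp : form -> form -> form
| Box : form -> form.

Definition Neg (a : form) : form := Imp a Bot.
Definition Top : form := Neg Bot.
Definition And (a b : form) : form := Neg (Imp a (Neg b)).
Definition Or (a b : form) : form := Imp (Neg a) b.

Definition Boxdot (a : form) : form := And a (Box a).
Fixpoint Boxdot_n (n : nat) (a : form) : form :=
  match n with 0 => a | S k => Boxdot (Boxdot_n k a) end.

Fixpoint subst (s : nat -> form) (a : form) : form :=
  match a with
  | Var n => s n
  | Bot => Bot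
  | Imp a b => Imp (subst s a) (subst s b)
  | Box a => Box (subst s a)
  end.

Fixpoint vars_lt (n : nat) (a : form) : bool :=
  match a with
  | Var k => (k < n)%N
  | Bot => true
  | Imp a b => vars_lt n a && vars_lt n b
  | Box a => vars_lt n a
  end.

(** propositional tautologies of the modal language: formulas true under every
    classical valuation in which variables and boxed subformulas are atoms
    (= substitution instances of classical tautologies) *)
Fixpoint beval (v : form -> bool) (a : form) : bool :=
  match a with
  | Var n => v (Var n)
  | Bot => false
  | Imp a b => ~~ beval v a || beval v b
  | Box a => v (Box a)
  end.
Definition tautology (a : form) : Prop := forall v, beval v a = true.

Record normal_logic (L : form -> Prop) : Prop := {
  nl_taut : forall a, tautology a -> L a;
  nl_K : L (Imp (Box (Imp (Var 0) (Var 1))) (Imp (Box (Var 0)) (Box (Var 1))));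
  nl_MP : forall a b, L a -> L (Imp a b) -> L b;
  nl_Nec : forall a, L a -> L (Box a);
  nl_subst : forall s a, L a -> L (subst s a)
}.

Inductive gderiv (L : form -> Prop) (G : form -> Prop) : form -> Prop :=
| gd_logic : forall a, L a -> gderiv L G a
| gd_hyp : forall a, G a -> gderiv L G a
| gd_MP : forall a b, gderiv L G a -> gderiv L G (Imp a b) -> gderiv L G b
| gd_Nec : forall a, gderiv L G a -> gderiv L G (Box a).

Fixpoint ksat (W : Type) (R : W -> W -> Prop) (V : nat -> W -> Prop)
    (w : W) (a : form) : Prop :=
  match a with
  | Var n => V n w
  | Bot => False
  | Imp a b => ksat R V w a -> ksat R V w b
  | Box a => forall u, R w u -> ksat R V u a
  end.

Definition kmodel_true (W : Type) (R : W -> W -> Prop) (V : nat -> W -> Prop)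
  (a : form) : Prop := forall w, ksat R V w a.

Definition frame_for (L : form -> Prop) (W : Type) (R : W -> W -> Prop) : Prop :=
  forall a, L a -> forall V, kmodel_true R V a.

Definition strongly_kripke_complete (L : form -> Prop) : Prop :=
  forall (G : form -> Prop) (a : form), ~ gderiv L G a ->
    exists (W : Type) (R : W -> W -> Prop) (V : nat -> W -> Prop),
      frame_for L R /\ (forall g, G g -> kmodel_true R V g) /\ ~ kmodel_true R V a.

Definition n_transitive (L : form -> Prop) (n : nat) : Prop :=
  gderiv L (fun _ => False) (Imp (Boxdot_n n (Var 0)) (Boxdot_n n.+1 (Var 0))).
Definition weakly_transitive (L : form -> Prop) : Prop :=
  exists n : nat, n_transitive L n.

Record modalAlgebra := ModalAlgebra {
  ma_disp : Order.disp_t;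
  ma_car :> ctbDistrLatticeType ma_disp;
  ma_box : ma_car -> ma_car;
  ma_box_top : ma_box Order.top = Order.top;
  ma_box_meet : forall x y : ma_car,
    ma_box (Order.meet x y) = Order.meet (ma_box x) (ma_box y)
}.

Fixpoint aeval (A : modalAlgebra) (v : nat -> A) (a : form) : A :=
  match a with
  | Var n => v n
  | Bot => Order.bottom
  | Imp a b => Order.join (Order.compl (aeval v a)) (aeval v b)
  | Box a => ma_box (aeval v a)
  end.

Definition in_variety (L : form -> Prop) (A : modalAlgebra) : Prop :=
  forall a, L a -> forall v : nat -> A, aeval v a = Order.top.

Inductive gen (A : modalAlgebra) (X : A -> Prop) : A -> Prop :=
| gen_base : forall x, X x -> gen X x
| gen_bot : gen X Order.bottom
| gen_top : gen X Order.top
| gen_meet : forall x y, gen X x -> gen X y -> gen X (Order.meet x y)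
| gen_join : forall x y, gen X x -> gen X y -> gen X (Order.join x y)
| gen_compl : forall x, gen X x -> gen X (Order.compl x)
| gen_box : forall x, gen X x -> gen X (ma_box x).

Definition hom_on (A B : modalAlgebra) (P : A -> Prop) (f : A -> B) : Prop :=
  f Order.bottom = Order.bottom /\ f Order.top = Order.top /\
  (forall x y, P x -> P y -> f (Order.meet x y) = Order.meet (f x) (f y)) /\
  (forall x y, P x -> P y -> f (Order.join x y) = Order.join (f x) (f y)) /\
  (forall x, P x -> f (Order.compl x) = Order.compl (f x)) /\
  (forall x, P x -> f (ma_box x) = ma_box (f x)).

(** The subalgebra of A with carrier P is finitely presented in V_L:
    it is generated by g 0, ..., g (n-1) and, for a finite set E of equations
    in the variables x_0..x_(n-1) satisfied by g, it has the universal property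
    of the presentation < x_0..x_(n-1) | E > in V_L. *)
Definition fin_presented_sub (L : form -> Prop) (A : modalAlgebra)
    (P : A -> Prop) : Prop :=
  exists (n : nat) (g : nat -> A) (E : seq (form * form)),
    (forall x, P x <-> gen (fun y => exists2 i, (i < n)%N & y = g i) x) /\
    (forall e, List.In e E -> vars_lt n e.1 && vars_lt n e.2) /\
    (forall e, List.In e E -> aeval g e.1 = aeval g e.2) /\
    (forall (B : modalAlgebra) (b : nat -> B), in_variety L B ->
       (forall e, List.In e E -> aeval b e.1 = aeval b e.2) ->
       exists f : A -> B, hom_on P f /\ forall i, (i < n)%N -> f (g i) = b i).

Definition fin_presented (L : form -> Prop) (A : modalAlgebra) : Prop :=
  fin_presented_sub L (fun _ : A => True).

Definition coherent (L : form -> Prop) : Prop :=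
  forall A : modalAlgebra, in_variety L A -> fin_presented L A ->
    forall gs : seq A, fin_presented_sub L (gen (fun x => x \in gs)).

(* Main.v *)
Require Import Defs.
From mathcomp Require Import all_boot all_order.
From HB Require Import structures.
From mathcomp Require Import generic_quotient.
From Stdlib Require Import ClassicalEpsilon.
From Stdlib Require Import Classical.
From Stdlib Require List.
Set Implicit Arguments.
Unset Strict Implicit.
Unset Printing Implicit Defensive.
Import Order.Theory.
Local Open Scope quotient_scope.

Fixpoint enc (f : form) : GenTree.tree nat :=
  match f with
  | Var n => GenTree.Leaf n
  | Bot => GenTree.Node 0 [::]
  | Imp a b => GenTree.Node 1 [:: enc a; enc b]
  | Box a => GenTree.Node 2 [:: enc a]
  end.
Fixpoint dec (t : GenTree.tree nat) : option form :=
  match t with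
  | GenTree.Leaf n => Some (Var n)
  | GenTree.Node 0 [::] => Some Bot
  | GenTree.Node 1 [:: a; b] =>
      match dec a, dec b with Some a', Some b' => Some (Imp a' b') | _, _ => None end
  | GenTree.Node 2 [:: a] => match dec a with Some a' => Some (Box a') | None => None end
  | _ => None
  end.
Lemma encK : pcancel enc dec.
Proof. by elim=> //= [a -> b ->|a ->]. Qed.
HB.instance Definition _ := Countable.copy form (pcan_type encK).

Definition pb (P : Prop) : bool := if excluded_middle_informative P then true else false.
Lemma pbP P : reflect P (pb P).
Proof. by rewrite /pb; case: excluded_middle_informative => h; constructor. Qed.

Definition Iff (a b : form) := And (Imp a b) (Imp b a).

Record theory := Theory {
  th :> form -> Prop;
  th_taut : forall a, tautology a -> th a;
  th_MP : forall a b, th a -> th (Imp a b) -> th b;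
  th_Nec : forall a, th a -> th (Box a);
  th_K : forall a b, th (Imp (Box (Imp a b)) (Imp (Box a) (Box b)))
}.
Arguments th_MP {t a b}. Arguments th_taut {t a}. Arguments th_Nec {t a}. Arguments th_K {t}.

Ltac taut := let v := fresh "v" in move=> v /=;
  repeat match goal with |- context [beval v ?x] => case: (beval v x) end;
  repeat match goal with |- context [v ?x] => case: (v x) end; by [].

Section Th.
Variable T : theory.
Lemma th2 a b : tautology (Imp a b) -> T a -> T b.
Proof. by move=> h ha; apply: th_MP ha (th_taut h). Qed.
Lemma th3 a b c : tautology (Imp a (Imp b c)) -> T a -> T b -> T c.
Proof. by move=> h ha hb; apply: th_MP hb (th_MP ha (th_taut h)). Qed.
Definition eqv a b := T (Iff a b).
Lemma eqv_refl a : eqv a a. Proof. by apply: th_taut; taut. Qed.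
Lemma eqv_sym a b : eqv a b -> eqv b a. Proof. by apply: th2; taut. Qed.
Lemma eqv_trans a b c : eqv a b -> eqv b c -> eqv a c. Proof. by apply: th3; taut. Qed.
Lemma eqv_Imp a a' b b' : eqv a a' -> eqv b b' -> eqv (Imp a b) (Imp a' b').
Proof. by apply: th3; taut. Qed.
Lemma th_boxmono a b : T (Imp a b) -> T (Imp (Box a) (Box b)).
Proof. by move=> h; apply: th_MP (th_Nec h) (th_K _ _). Qed.
Lemma eqv_Box a a' : eqv a a' -> eqv (Box a) (Box a').
Proof.
move=> h.
have h1 : T (Imp a a') by apply: th2 h; taut.
have h2 : T (Imp a' a) by apply: th2 h; taut.
by apply: th3 (th_boxmono h1) (th_boxmono h2); taut.
Qed.
Lemma eqv_Neg a a' : eqv a a' -> eqv (Neg a) (Neg a').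
Proof. by move=> h; apply: eqv_Imp h (eqv_refl _). Qed.
Lemma eqv_And a a' b b' : eqv a a' -> eqv b b' -> eqv (And a b) (And a' b').
Proof. by move=> h1 h2; apply/eqv_Neg/eqv_Imp/eqv_Neg. Qed.
Lemma eqv_Or a a' b b' : eqv a a' -> eqv b b' -> eqv (Or a b) (Or a' b').
Proof. by move=> h1 h2; apply/eqv_Imp/h2/eqv_Neg. Qed.

Definition eqvb a b := pb (eqv a b).
Lemma eqvb_equiv : equiv_class_of eqvb.
Proof.
split.
- by move=> a; apply/pbP/eqv_refl.
- by move=> a b; apply/pbP/pbP => /eqv_sym.
- by move=> b a c /pbP hab /pbP hbc; apply/pbP; apply: eqv_trans hab hbc.
Qed.
Definition eqvr := EquivRelPack eqvb_equiv.
End Th.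

Definition Lind (T : theory) := {eq_quot (eqvr T)}.
HB.instance Definition _ T := Choice.on (Lind T).
HB.instance Definition _ T := Quotient.on (Lind T).
Definition cls T (a : form) : Lind T := \pi_(Lind T) a.
Lemma clsP T a b : cls T a = cls T b <-> eqv T a b.
Proof. by split=> [/eqmodP/pbP|h]; [|apply/eqmodP/pbP]. Qed.

Section Ops.
Variable T : theory.
Local Notation Q := (Lind T).
Local Notation cl := (cls T).
Lemma reprE a : eqv T (repr (cl a)) a.
Proof. by apply/clsP; rewrite /cls reprK. Qed.
Lemma clsK (x : Q) : cl (repr x) = x.
Proof. exact: reprK. Qed.
Lemma clsW (P : Q -> Prop) : (forall a, P (cl a)) -> forall x, P x.
Proof. by move=> h x; rewrite -(clsK x). Qed.

Definition meetQ (x y : Q) := cl (And (repr x) (repr y)).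
Definition joinQ (x y : Q) := cl (Or (repr x) (repr y)).
Definition complQ (x : Q) := cl (Neg (repr x)).
Definition boxQ (x : Q) := cl (Box (repr x)).
Definition topQ := cl Top.
Definition botQ := cl Bot.

Lemma meetQE a b : meetQ (cl a) (cl b) = cl (And a b).
Proof. by apply/clsP/eqv_And; apply: reprE. Qed.
Lemma joinQE a b : joinQ (cl a) (cl b) = cl (Or a b).
Proof. by apply/clsP/eqv_Or; apply: reprE. Qed.
Lemma complQE a : complQ (cl a) = cl (Neg a).
Proof. by apply/clsP/eqv_Neg; apply: reprE. Qed.
Lemma boxQE a : boxQ (cl a) = cl (Box a).
Proof. by apply/clsP/eqv_Box; apply: reprE. Qed.

Lemma clsT a : cl a = topQ <-> T a.
Proof.
rewrite clsP; split; first by apply: th2; taut.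
by move=> h; apply: th2 h; taut.
Qed.

Ltac qsolve := rewrite ?(meetQE, joinQE, complQE, boxQE); apply/clsP; apply: th_taut; taut.

Lemma meetQC : commutative meetQ.
Proof. by elim/clsW=> a; elim/clsW=> b; qsolve. Qed.
Lemma joinQC : commutative joinQ.
Proof. by elim/clsW=> a; elim/clsW=> b; qsolve. Qed.
Lemma meetQA : associative meetQ.
Proof. by elim/clsW=> a; elim/clsW=> b; elim/clsW=> c; qsolve. Qed.
Lemma joinQA : associative joinQ.
Proof. by elim/clsW=> a; elim/clsW=> b; elim/clsW=> c; qsolve. Qed.
Lemma joinQKI : forall y x, meetQ x (joinQ x y) = x.
Proof. by elim/clsW=> a; elim/clsW=> b; qsolve. Qed.
Lemma meetQKU : forall y x, joinQ x (meetQ x y) = x.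
Proof. by elim/clsW=> a; elim/clsW=> b; qsolve. Qed.
Lemma meetQUl : left_distributive meetQ joinQ.
Proof. by elim/clsW=> a; elim/clsW=> b; elim/clsW=> c; qsolve. Qed.
Lemma meetQxx : idempotent_op meetQ.
Proof. by elim/clsW=> a; qsolve. Qed.
Lemma meetQ0x x : meetQ botQ x = botQ.
Proof. by elim/clsW: x => a; rewrite /botQ; qsolve. Qed.
Lemma meetQx1 x : meetQ x topQ = x.
Proof. by elim/clsW: x => a; rewrite /topQ; qsolve. Qed.
Lemma joinQxC x : joinQ x (complQ x) = topQ.
Proof. by elim/clsW: x => a; rewrite /topQ; qsolve. Qed.
Lemma meetQxC x : meetQ x (complQ x) = botQ.
Proof. by elim/clsW: x => a; rewrite /botQ; qsolve. Qed.
Lemma boxQ1 : boxQ topQ = topQ.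
Proof.
rewrite /topQ boxQE; apply/clsT; apply: th_Nec; apply: th_taut; taut.
Qed.
Lemma boxQI x y : boxQ (meetQ x y) = meetQ (boxQ x) (boxQ y).
Proof.
elim/clsW: x => a; elim/clsW: y => b; rewrite !(meetQE, boxQE); apply/clsP.
have h1 : T (Imp (Box (And a b)) (Box a)) by apply: th_boxmono; apply: th_taut; taut.
have h2 : T (Imp (Box (And a b)) (Box b)) by apply: th_boxmono; apply: th_taut; taut.
have h3 : T (Imp (Box a) (Box (Imp b (And a b)))) by apply: th_boxmono; apply: th_taut; taut.
have h4 := @th_K T b (And a b).
have h5 : T (Imp (Box a) (Imp (Box b) (Box (And a b)))).
  by apply: th3 h3 h4; taut.
have h6 : T (Imp (Box (And a b)) (And (Box a) (Box b))) by apply: th3 h1 h2; taut.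
have h7 : T (Imp (And (Box a) (Box b)) (Box (And a b))) by apply: th2 h5; taut.
by apply: th3 h6 h7; taut.
Qed.
End Ops.

Definition ldisp : Order.disp_t := Order.Disp tt tt.
Definition leQ T (x y : Lind T) := meetQ x y == x.
Definition ltQ T (x y : Lind T) := (y != x) && leQ x y.
HB.instance Definition _ T := Order.isMeetJoinDistrLattice.Build ldisp (Lind T)
  (fun x y => erefl (leQ x y)) (fun x y => erefl (ltQ x y))
  (@meetQC T) (@joinQC T) (@meetQA T) (@joinQA T) (@joinQKI T) (@meetQKU T)
  (@meetQUl T) (@meetQxx T).
Lemma le0Q T (x : Lind T) : (botQ T <= x)%O.
Proof. by apply/eqP; apply: meetQ0x. Qed.
HB.instance Definition _ T := Order.hasBottom.Build ldisp (Lind T) (@le0Q T).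
Lemma leQ1 T (x : Lind T) : (x <= topQ T)%O.
Proof. by apply/eqP; apply: meetQx1. Qed.
HB.instance Definition _ T := Order.hasTop.Build ldisp (Lind T) (@leQ1 T).
HB.instance Definition _ T := Order.TBDistrLattice_hasComplement.Build ldisp (Lind T)
  (@joinQxC T) (@meetQxC T).

Definition LindMA (T : theory) : modalAlgebra :=
  @ModalAlgebra ldisp (Lind T) (@boxQ T) (@boxQ1 T) (@boxQI T).

Lemma aeval_cls T (s : nat -> form) a :
  @aeval (LindMA T) (fun i => cls T (s i)) a = cls T (subst s a).
Proof.
elim: a => [n||a IHa b IHb|a IHa] //=.
- rewrite IHa IHb.
  change (joinQ (complQ (cls T (subst s a))) (cls T (subst s b)) = cls T (Imp (subst s a) (subst s b))).
  rewrite complQE joinQE; apply/clsP; apply: th_taut; taut.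
- rewrite IHa; exact: boxQE.
Qed.


Lemma subst_comp r s a : subst r (subst s a) = subst (fun i => subst r (s i)) a.
Proof. by elim: a => [n||a IHa b IHb|a IHa] //=; rewrite ?IHa ?IHb. Qed.
Lemma subst_ext n s s' a : vars_lt n a -> (forall i, (i < n)%N -> s i = s' i) ->
  subst s a = subst s' a.
Proof.
move=> + h; elim: a => [k||a IHa b IHb|a IHa] //=.
- by move=> /h.
- by case/andP=> /IHa -> /IHb ->.
- by move=> /IHa ->.
Qed.
Lemma subst_Var a : subst Var a = a.
Proof. by elim: a => [n||a IHa b IHb|a IHa] //=; rewrite ?IHa ?IHb. Qed.
Lemma vars_subst m n s a : vars_lt m a -> (forall i, (i < m)%N -> vars_lt n (s i)) ->
  vars_lt n (subst s a).
Proof.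
move=> + h; elim: a => [k||a IHa b IHb|a IHa] //=.
- by move=> /h.
- by case/andP=> /IHa -> /IHb ->.
Qed.
Lemma vars_Boxdot n k a : vars_lt n (Boxdot_n k a) = vars_lt n a.
Proof. by elim: k => //= k ->; rewrite !andbT andbb. Qed.
Lemma subst_Boxdot s k a : subst s (Boxdot_n k a) = Boxdot_n k (subst s a).
Proof. by elim: k => //= k ->. Qed.

Section Alg.
Variable A : modalAlgebra.
Implicit Types (v w : nat -> A).

Lemma aeval_ext n v w a : vars_lt n a -> (forall i, (i < n)%N -> v i = w i) ->
  aeval v a = aeval w a.
Proof.
move=> + h; elim: a => [k||a IHa b IHb|a IHa] //=.
- by move=> /h.
- by case/andP=> /IHa -> /IHb ->.
- by move=> /IHa ->.
Qed.
Lemma aeval_subst v s a : aeval v (subst s a) = aeval (fun i => aeval v (s i)) a.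
Proof. by elim: a => [n||a IHa b IHb|a IHa] //=; rewrite ?IHa ?IHb. Qed.
Lemma aeval_And v a b : aeval v (And a b) = Order.meet (aeval v a) (aeval v b).
Proof. by rewrite /= !joinx0 complU !complK. Qed.
Lemma aeval_Or v a b : aeval v (Or a b) = Order.join (aeval v a) (aeval v b).
Proof. by rewrite /= !joinx0 complK. Qed.
Lemma aeval_Neg v a : aeval v (Neg a) = Order.compl (aeval v a).
Proof. by rewrite /= joinx0. Qed.
Lemma aeval_Top v : aeval v Top = Order.top.
Proof. by rewrite /= joinx0 compl0. Qed.

Lemma imp_top (p q : A) : Order.join (Order.compl p) q = Order.top -> p = Order.top -> q = Order.top.
Proof. by move=> h hp; rewrite hp compl1 join0x in h. Qed.
Lemma imp_le (p q : A) : Order.join (Order.compl p) q = Order.top -> (p <= q)%O.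
Proof.
move=> h; apply/meet_idPl.
have : Order.meet p (Order.join (Order.compl p) q) = p by rewrite h meetx1.
by rewrite meetUr meetxC join0x.
Qed.
Lemma aeval_Iff v a b : aeval v (Iff a b) = Order.top -> aeval v a = aeval v b.
Proof.
rewrite /Iff aeval_And /= => /eqP; rewrite meet_eq1 => /andP[/eqP h1 /eqP h2].
by apply/le_anti; rewrite !imp_le.
Qed.

Definition genset n (g : nat -> A) := gen (fun y => exists2 i, (i < n)%N & y = g i).

Lemma aeval_gen n g a : vars_lt n a -> genset n g (aeval g a).
Proof.
elim: a => [k||a IHa b IHb|a IHa] //=.
- by move=> h; apply: gen_base; exists k.
- by move=> _; apply: gen_bot.
- by case/andP=> /IHa ha /IHb hb; apply: gen_join => //; apply: gen_compl.
- by move=> /IHa; apply: gen_box.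
Qed.
Lemma gen_aeval n g q : genset n g q -> exists a, vars_lt n a /\ q = aeval g a.
Proof.
elim=> {q}.
- by move=> x [i hi ->]; exists (Var i).
- by exists Bot.
- by exists Top; rewrite aeval_Top.
- by move=> x y _ [a [ha ->]] _ [b [hb ->]]; exists (And a b); rewrite aeval_And /= ha hb.
- by move=> x y _ [a [ha ->]] _ [b [hb ->]]; exists (Or a b); rewrite aeval_Or /= ha hb.
- by move=> x _ [a [ha ->]]; exists (Neg a); rewrite aeval_Neg /= ha.
- by move=> x _ [a [ha ->]]; exists (Box a).
Qed.

Lemma hom_aeval (B : modalAlgebra) (P : A -> Prop) (f : A -> B) n g a :
  hom_on P f -> (forall q, P q <-> genset n g q) -> vars_lt n a ->
  f (aeval g a) = aeval (fun i => f (g i)) a.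
Proof.
move=> [f0 [f1 [fm [fj [fc fb]]]]] hP.
have gP b : vars_lt n b -> P (aeval g b) by move=> hb; apply/hP/aeval_gen.
elim: a => [k||a IHa b IHb|a IHa] //=.
- case/andP=> ha hb.
  rewrite fj ?fc ?IHa ?IHb //; first exact: gP.
  apply/hP; apply: gen_compl; exact: aeval_gen.
  exact: gP.
- by move=> ha; rewrite fb ?IHa //; apply: gP.
Qed.

Lemma alg_sound (L : form -> Prop) (G : form -> Prop) v a :
  in_variety L A -> (forall h, G h -> aeval v h = Order.top) -> gderiv L G a ->
  aeval v a = Order.top.
Proof.
move=> hV hG; elim=> {a}.
- by move=> a ha; apply: hV.
- by move=> a /hG.
- by move=> a b _ ha _ hab; apply: imp_top hab ha.
- by move=> a _ /= ->; apply: ma_box_top.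
Qed.
End Alg.


Section Logic.
Variable L : form -> Prop.
Hypothesis hL : normal_logic L.

Definition thy (G : form -> Prop) (r : nat -> form) : theory.
Proof.
refine (@Theory (fun c => gderiv L G (subst r c)) _ _ _ _).
- by move=> a ha; apply: gd_logic; apply: (nl_subst hL); apply: (nl_taut hL).
- by move=> a b ha hb; apply: gd_MP ha hb.
- by move=> a ha; apply: gd_Nec ha.
- move=> a b; apply: gd_logic.
  have := nl_subst hL (fun i => match i with 0 => subst r a | 1 => subst r b | _ => Bot end) (nl_K hL).
  by [].
Defined.

Definition gthy (G : form -> Prop) : theory.
Proof.
refine (@Theory (gderiv L G) _ _ _ _).
- by move=> a ha; apply: gd_logic; apply: (nl_taut hL).
- by move=> a b ha hb; apply: gd_MP ha hb.
- by move=> a ha; apply: gd_Nec ha.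
- move=> a b; apply: gd_logic.
  have := nl_subst hL (fun i => match i with 0 => a | 1 => b | _ => Bot end) (nl_K hL).
  by [].
Defined.

Lemma aeval_ext_all (A : modalAlgebra) (v w : nat -> A) a :
  (forall i, v i = w i) -> aeval v a = aeval w a.
Proof. by move=> h; elim: a => [n||a IHa b IHb|a IHa] //=; rewrite ?IHa ?IHb. Qed.

Lemma lind_variety G r : in_variety L (LindMA (thy G r)).
Proof.
move=> a ha v.
rewrite (@aeval_ext_all _ v (fun i => cls (thy G r) (repr (v i)))); last by move=> i; rewrite clsK.
rewrite aeval_cls; apply/clsT => /=; apply: gd_logic.
by apply: (nl_subst hL); apply: (nl_subst hL).
Qed.

Lemma gd_cut G G' a : gderiv L G a -> (forall g, G g -> gderiv L G' g) -> gderiv L G' a.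
Proof.
move=> + h; elim=> {a}.
- by move=> a ha; apply: gd_logic.
- by move=> a /h.
- by move=> a b _ ha _ hab; apply: gd_MP ha hab.
- by move=> a _ ha; apply: gd_Nec.
Qed.

Lemma gd_subst G s a : gderiv L G a ->
  gderiv L (fun c => exists2 h, G h & c = subst s h) (subst s a).
Proof.
elim=> {a}.
- by move=> a ha; apply: gd_logic; apply: (nl_subst hL).
- by move=> a ha; apply: gd_hyp; exists a.
- by move=> a b _ ha _ hab; apply: gd_MP ha hab.
- by move=> a _ ha; apply: gd_Nec.
Qed.

Definition H n := Imp (Var 0) (Boxdot_n n (Var 1)).

Lemma H_mono G n M : (n <= M)%N -> gderiv L G (H M) -> gderiv L G (H n).
Proof.
move/subnK => <-; elim: (M - n)%N => [|d IH] //= h.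
apply: IH; apply: (@th2 (gthy G)) h; rewrite /H /=; taut.
Qed.

Lemma finitary a : gderiv L (fun c => exists k, c = H k) a ->
  exists N, forall M, (N <= M)%N -> gderiv L (fun c => c = H M) a.
Proof.
elim=> {a}.
- by move=> a ha; exists 0%N => M _; apply: gd_logic.
- move=> a [k ->]; exists k => M hM; apply: H_mono hM _; exact: gd_hyp.
- move=> a b _ [N1 h1] _ [N2 h2]; exists (maxn N1 N2) => M hM.
  apply: gd_MP (h1 M _) (h2 M _).
  + by apply: leq_trans hM; apply: leq_maxl.
  + by apply: leq_trans hM; apply: leq_maxr.
- by move=> a _ [N h]; exists N => M hM; apply: gd_Nec; apply: h.
Qed.

Lemma list_bound (P : nat -> form -> Prop) (l : seq form) :
  (forall c, List.In c l -> exists N, forall M, (N <= M)%N -> P M c) ->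
  exists N, forall M, (N <= M)%N -> forall c, List.In c l -> P M c.
Proof.
elim: l => [|c l IH] h; first by exists 0%N.
have [N1 h1] := h c (or_introl erefl).
have [N2 h2] := IH (fun c' hc' => h c' (or_intror hc')).
exists (maxn N1 N2) => M hM c' [<-|hc'].
- by apply: h1; apply: leq_trans hM; apply: leq_maxl.
- by apply: h2 => //; apply: leq_trans hM; apply: leq_maxr.
Qed.
End Logic.

Section Kripke.
Variables (W : Type) (R : W -> W -> Prop).

Lemma ks_sound L G V a : frame_for L R -> (forall g, G g -> kmodel_true R V g) ->
  gderiv L G a -> kmodel_true R V a.
Proof.
move=> hF hG; elim=> {a}.
- by move=> a ha; apply: hF.
- by move=> a /hG.
- by move=> a b _ ha _ hab w; apply: hab (ha w).
- by move=> a _ ha w u _; apply: ha.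
Qed.

Lemma ksat_ext n V V' a : vars_lt n a -> (forall i, (i < n)%N -> forall w, V i w <-> V' i w) ->
  forall w, ksat R V w a <-> ksat R V' w a.
Proof.
move=> + h; elim: a => [k||a IHa b IHb|a IHa] //=.
- by move=> hk w; apply: h.
- case/andP=> ha hb w /=; split=> hh hx.
  + by apply/(IHb hb w); apply: hh; apply/(IHa ha w).
  + by apply/(IHb hb w); apply: hh; apply/(IHa ha w).
- by move=> ha w; split=> hh u hu; apply/(IHa ha u); apply: hh.
Qed.

Fixpoint iterR (k : nat) (a c : W) : Prop :=
  match k with 0 => a = c | S k => exists b, R a b /\ iterR k b c end.

Lemma iterR_snoc k a b c : iterR k a b -> R b c -> iterR k.+1 a c.
Proof.
elim: k a => [|k IH] a /=.
- by move=> -> hbc; exists c.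
- by move=> [d [had hdb]] hbc; exists d; split => //; apply: IH hdb hbc.
Qed.

Lemma ksat_And V w p q : ksat R V w (And p q) -> ksat R V w p /\ ksat R V w q.
Proof.
move=> /= h; split; apply: NNPP => hn; apply: h => hp hq; exact: hn.
Qed.

Lemma ksat_Boxdot V k a w v : ksat R V w (Boxdot_n k a) -> iterR k w v -> ksat R V v a.
Proof.
elim: k a w => [|k IH] a w /=; first by move=> h <-.
move=> h [b [hwb hbv]]; apply: IH _ hbv; apply: NNPP => hn.
by apply: h => _ hB; apply: hn; apply: hB.
Qed.
End Kripke.


Lemma subst_ext_all s s' a : (forall i, s i = s' i) -> subst s a = subst s' a.
Proof. by move=> h; elim: a => [n||a IHa b IHb|a IHa] //=; rewrite ?IHa ?IHb. Qed.
Lemma vars_subst_all n s a : (forall i, vars_lt n (s i)) -> vars_lt n (subst s a).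
Proof. by move=> h; elim: a => [k||a IHa b IHb|a IHa] //=; rewrite ?IHa ?IHb. Qed.
Lemma fin_choice (P : nat -> form -> Prop) n :
  (forall i, (i < n)%N -> exists a, P i a) -> exists f, forall i, (i < n)%N -> P i (f i).
Proof.
elim: n => [|n IH] h; first by exists (fun _ => Bot).
have [f hf] := IH (fun i hi => h i (ltnW hi)).
have [a ha] := h n (ltnSn n).
exists (fun i => if i == n then a else f i) => i hi.
case: eqP => [->//|/eqP ne]; apply: hf; by rewrite ltn_neqAle ne -ltnS.
Qed.

Definition GE (c : form) : Prop :=
  c = Imp (Var 0) (Var 2) \/ c = Imp (Var 2) (Box (Var 2)) \/ c = Imp (Var 2) (Var 1).
Definition rr (i : nat) : form := if (i < 3)%N then Var i else Bot.

Lemma vars_H K : vars_lt 2 (H K).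
Proof. by rewrite /H /= vars_Boxdot. Qed.

Lemma subst_fix2 s a : vars_lt 2 a -> (forall i, (i < 2)%N -> s i = Var i) -> subst s a = a.
Proof. by move=> ha hs; rewrite (subst_ext ha hs) subst_Var. Qed.


Section Main.
Variable L : form -> Prop.
Hypothesis hL : normal_logic L.

Lemma GE_H K : gderiv L GE (H K).
Proof.
pose T := gthy hL GE.
have hy : forall K, T (Imp (Var 2) (Boxdot_n K (Var 1))).
  elim=> [|k IH] /=; first by apply: gd_hyp; right; right.
  have h1 : T (Imp (Box (Var 2)) (Box (Boxdot_n k (Var 1)))) by apply: th_boxmono.
  have h2 : T (Imp (Var 2) (Box (Var 2))) by apply: gd_hyp; right; left.
  have h3 : T (Imp (Var 2) (Box (Boxdot_n k (Var 1)))) by apply: th3 h2 h1; taut.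
  by apply: th3 IH h3; taut.
have h0 : T (Imp (Var 0) (Var 2)) by apply: gd_hyp; left.
by apply: th3 h0 (hy K); taut.
Qed.

Definition TA := thy hL GE rr.
Definition AA := LindMA TA.

Lemma rr_idem a : subst rr (subst rr a) = subst rr a.
Proof.
rewrite subst_comp; apply: subst_ext_all => i; rewrite /rr.
by case: ifP => //= ->.
Qed.

Lemma clsA_aeval a : cls TA a = @aeval AA (fun i => cls TA (Var i)) a.
Proof. by rewrite aeval_cls subst_Var. Qed.

Lemma AA_fp : fin_presented L AA.
Proof.
exists 3%N, (fun i => cls TA (Var i)),
  [:: (Imp (Var 0) (Var 2), Top); (Imp (Var 2) (Box (Var 2)), Top); (Imp (Var 2) (Var 1), Top)].
split; [|split; [|split]].
- move=> q; split=> // _.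
  have -> : q = cls TA (subst rr (repr q)).
    rewrite -{1}(clsK q); apply/clsP; rewrite /eqv /=; rewrite rr_idem.
    exact: (@eqv_refl (gthy hL GE)).
  rewrite clsA_aeval; apply: (@aeval_gen AA).
  apply: vars_subst_all => i; rewrite /rr; by case: ifP.
- by move=> e; case=> [<-|[<-|[<-|[]]]].
- move=> e he.
  have -> : @aeval AA (fun i => cls TA (Var i)) e.2 = Order.top.
    by case: he => [<-|[<-|[<-|[]]]]; apply: aeval_Top.
  rewrite -clsA_aeval; apply/clsT => /=.
  by case: he => [<-|[<-|[<-|[]]]]; apply: gd_hyp; rewrite /GE /rr /=; auto.
- move=> B b hB hE.
  have hGE : forall h, GE h -> aeval b h = Order.top.
    move=> h hh; rewrite -(aeval_Top b).
    by case: hh => [->|[->|->]]; apply: (hE (_, Top)); rewrite /=; auto.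
  pose f := fun q : AA => aeval b (subst rr (repr q)).
  have fE : forall a, f (cls TA a) = aeval b (subst rr a).
    move=> a; apply: aeval_Iff; apply: alg_sound hB hGE _.
    exact: (@reprE TA a).
  exists f; split.
  + split; [|split; [|split; [|split; [|split]]]].
    * by rewrite (_ : Order.bottom = cls TA Bot) // fE.
    * by rewrite (_ : Order.top = cls TA Top) // fE; apply: aeval_Top.
    * elim/clsW => a; elim/clsW => c _ _.
      rewrite (_ : Order.meet _ _ = cls TA (And a c)); last exact: meetQE.
      by rewrite !fE (aeval_And b (subst rr a)).
    * elim/clsW => a; elim/clsW => c _ _.
      rewrite (_ : Order.join _ _ = cls TA (Or a c)); last exact: joinQE.
      by rewrite !fE (aeval_Or b (subst rr a)).
    * elim/clsW => a _.
      rewrite (_ : Order.compl _ = cls TA (Neg a)); last exact: complQE.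
      by rewrite !fE (aeval_Neg b (subst rr a)).
    * elim/clsW => a _.
      rewrite (_ : @ma_box AA (cls TA a) = cls TA (Box a)); last exact: boxQE.
      by rewrite !fE.
  + by move=> i hi; rewrite fE /= /rr hi.
Qed.
End Main.


Section Main2.
Variable L : form -> Prop.
Hypothesis hL : normal_logic L.
Hypothesis hS : strongly_kripke_complete L.

Lemma semantic phi : vars_lt 2 phi -> gderiv L GE phi ->
  gderiv L (fun c => exists k, c = H k) phi.
Proof.
move=> hv hd; apply: NNPP => hn.
have [W [R [V [hF [hG hnot]]]]] := hS hn.
pose Y := fun w => exists w0 k, V 0%N w0 /\ iterR R k w0 w.
pose V' := fun i => if i == 2%N then Y else V i.
apply: hnot => w.
have hGE : forall g, GE g -> kmodel_true R V' g.
  move=> g [->|[->|->]] w' /=; rewrite /V' /=.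
  - by move=> h0; exists w', 0%N.
  - by move=> [w0 [k [h0 hk]]] v hv'; exists w0, k.+1; split => //; apply: iterR_snoc hk hv'.
  - move=> [w0 [k [h0 hk]]].
    have := hG (H k) (ex_intro _ k erefl) w0 h0.
    by move=> hb; apply: (ksat_Boxdot hb hk).
have hs := ks_sound hF hGE hd w.
have hext : forall i, (i < 2)%N -> forall w', V i w' <-> V' i w'.
  by move=> i hi w'; rewrite /V'; case: eqP => // e; rewrite e in hi.
exact: (proj2 (@ksat_ext W R 2 V V' phi hv hext w) hs).
Qed.
End Main2.


Theorem theorem4p1 (L : form -> Prop) :
  normal_logic L -> coherent L -> strongly_kripke_complete L ->
  weakly_transitive L.
Proof.
move=> hL hC hS.
have rr2 : forall i, (i < 2)%N -> rr i = Var i.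
  by move=> i hi; rewrite /rr (ltn_trans hi).
set gs := [:: cls (TA hL) (Var 0); cls (TA hL) (Var 1)] : seq (AA hL).
have [n [g [E [hgen [hvars [heq huniv]]]]]] :=
  hC (AA hL) (@lind_variety L hL GE rr) (AA_fp hL) gs.
have gform : forall q : AA hL, gen (fun z => z \in gs) q ->
    exists t, vars_lt 2 t /\ q = cls (TA hL) t.
  move=> q; elim => {q}.
  - move=> z; rewrite !inE => /orP [/eqP ->|/eqP ->]; [exists (Var 0) | exists (Var 1)]; done.
  - by exists Bot.
  - by exists Top.
  - move=> x y _ [a [ha ->]] _ [c [hc ->]]; exists (And a c); split; first by rewrite /= ha hc.
    exact: meetQE.
  - move=> x y _ [a [ha ->]] _ [c [hc ->]]; exists (Or a c); split; first by rewrite /= ha hc.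
    exact: joinQE.
  - move=> x _ [a [ha ->]]; exists (Neg a); split; first by rewrite /= ha.
    exact: complQE.
  - move=> x _ [a [ha ->]]; exists (Box a); split; first by rewrite /= ha.
    exact: boxQE.
have [tau htau] : exists tau, forall i, (i < n)%N -> vars_lt 2 (tau i) /\ g i = cls (TA hL) (tau i).
  apply: (@fin_choice (fun i t => vars_lt 2 t /\ g i = cls (TA hL) t) n) => i hi.
  by apply: gform; apply/hgen; apply: gen_base; exists i.
have gev : forall t, vars_lt n t -> aeval g t = cls (TA hL) (subst tau t).
  move=> t ht; rewrite -aeval_cls; apply: (aeval_ext ht) => i hi; exact: (htau i hi).2.
have [sx [hsx esx]] : exists sx, vars_lt n sx /\ cls (TA hL) (Var 0) = aeval g sx.
  by apply: (@gen_aeval (AA hL)); apply/hgen; apply: gen_base; rewrite inE eqxx.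
have [su [hsu esu]] : exists su, vars_lt n su /\ cls (TA hL) (Var 1) = aeval g su.
  by apply: (@gen_aeval (AA hL)); apply/hgen; apply: gen_base; rewrite !inE eqxx orbT.
pose Phil := Iff (Var 0) (subst tau sx) :: Iff (Var 1) (subst tau su) ::
  map (fun e => Iff (subst tau e.1) (subst tau e.2)) E.
have tvars : forall t, vars_lt n t -> vars_lt 2 (subst tau t).
  by move=> t ht; apply: (vars_subst ht) => i hi; exact: (htau i hi).1.
have key : forall a c, vars_lt 2 a -> vars_lt 2 c -> cls (TA hL) a = cls (TA hL) c ->
    vars_lt 2 (Iff a c) /\ gderiv L GE (Iff a c).
  move=> a c ha hc /clsP hac; split; first by rewrite /= ha hc.
  move: hac; rewrite /eqv /=.
  by rewrite (subst_fix2 ha rr2) (subst_fix2 hc rr2).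
have hPhi : forall c, List.In c Phil -> vars_lt 2 c /\ gderiv L GE c.
  move=> c [<-|[<-|/List.in_map_iff [e [<- he]]]].
  - by apply: key => //; [apply: tvars hsx | rewrite esx gev].
  - by apply: key => //; [apply: tvars hsu | rewrite esu gev].
  - have /andP [h1 h2] := hvars e he.
    by apply: key; [apply: tvars h1 | apply: tvars h2 | rewrite -!gev //; apply: heq].
have hfin : forall c, List.In c Phil ->
    exists N, forall M, (N <= M)%N -> gderiv L (fun d => d = H M) c.
  move=> c hc; have [hv hd] := hPhi c hc; apply: (finitary hL).
  have hh := semantic hS hv. exact: hh.
have [N hN] := list_bound hfin.
pose TB := thy hL (fun c => List.In c Phil) Var.
have hB : forall K, gderiv L (fun c => List.In c Phil) (H K).
  move=> K.
  have hE' : forall e, List.In e E -> @aeval (LindMA TB) (fun i => cls TB (tau i)) e.1 =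
      @aeval (LindMA TB) (fun i => cls TB (tau i)) e.2.
    move=> e he; rewrite !aeval_cls; apply/clsP; rewrite /eqv.
    change (gderiv L (fun c => List.In c Phil) (subst Var (Iff (subst tau e.1) (subst tau e.2)))).
    rewrite subst_Var; apply: gd_hyp; right; right.
    exact: (List.in_map (fun e => Iff (subst tau e.1) (subst tau e.2)) E e he).
  have [f [hf hfg]] := huniv (LindMA TB) (fun i => cls TB (tau i)) (@lind_variety L hL (fun c => List.In c Phil) Var) hE'.
  pose sxu := fun i => match i with 0 => sx | 1 => su | _ => Bot end.
  have hv' : vars_lt n (subst sxu (H K)).
    by apply: (vars_subst (vars_H K)); case=> [|[|]].
  have htop : aeval g (subst sxu (H K)) = Order.top.
    rewrite aeval_subst (@aeval_ext (AA hL) 2 _ (fun i => cls (TA hL) (Var i)) _ (vars_H K)); last first.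
      by case=> [|[|i]] //= _; rewrite ?(esx, esu).
    rewrite -clsA_aeval; apply/clsT.
    change (gderiv L GE (subst rr (H K))); rewrite (subst_fix2 (vars_H K) rr2).
    exact: GE_H.
  have hB1 : @aeval (LindMA TB) (fun i => cls TB (tau i)) (subst sxu (H K)) = Order.top.
    rewrite -(aeval_ext hv' (v := fun i => f (g i))); last by move=> i hi; rewrite hfg.
    rewrite -(hom_aeval hf hgen hv') htop.
    exact: (proj1 (proj2 hf)).
  rewrite aeval_cls subst_comp in hB1.
  have hB2 : cls TB (H K) = Order.top.
    rewrite -hB1 -aeval_cls -[in LHS](subst_Var (H K)) -aeval_cls.
    apply: (@aeval_ext (LindMA TB) 2 _ _ (H K) (vars_H K)); case=> [|[|i]] //= _; apply/clsP; rewrite /eqv.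
    - change (gderiv L (fun c => List.In c Phil) (subst Var (Iff (Var 0) (subst tau sx)))).
      by rewrite subst_Var; apply: gd_hyp; left.
    - change (gderiv L (fun c => List.In c Phil) (subst Var (Iff (Var 1) (subst tau su)))).
      by rewrite subst_Var; apply: gd_hyp; right; left.
  have := proj1 (clsT _ _) hB2.
  by change (gderiv L (fun c => List.In c Phil) (subst Var (H K)) -> gderiv L (fun c => List.In c Phil) (H K)); rewrite subst_Var.
have hNN : gderiv L (fun c => c = H N) (H N.+1).
  by apply: gd_cut (hB N.+1) _ => c hc; exact: hN N (leqnn N) c hc.
pose s := fun i => match i with 0 => Boxdot_n N (Var 0) | _ => Var 0 end.
have hs := gd_subst hL s hNN.
exists N; rewrite /n_transitive.
have -> : Imp (Boxdot_n N (Var 0)) (Boxdot_n N.+1 (Var 0)) = subst s (H N.+1).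
  by rewrite /H /= subst_Boxdot.
apply: gd_cut hs _ => c [h -> ->]; apply: gd_logic; apply: (nl_taut hL).
rewrite /H /= subst_Boxdot /=; taut.
Qed.
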